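(* Let $G$ be a finitely generated group containing an element of infinite order. For every generating $n$-tuple $S\in\Gamma_n(G)$ and every $m\ge n+2$, the graph $\Gamma_m(G,S)$ has exponential growth.
   Context: For a group $G$, a generating $n$-tuple is $(g_1,\dots,g_n)\in G^n$ with $G=\langle g_1,\dots,g_n\rangle$. The product replacement graph $\Gamma_n(G)$ has vertices the generating $n$-tuples, with edges from $(g_1,\dots,g_n)$ to each tuple obtained by replacing $g_j$ by $g_jg_i^{\pm1}$ or $g_i^{\pm1}g_j$, for every ordered pair $i\neq j$. For $S=(g_1,\dots,g_n)$ and $m\ge n$, $\Gamma_m(G,S)$ is the connected component of $\Gamma_m(G)$ containing $(g_1,\dots,g_n,1,\dots,1)$ ($m-n$ identity entries). A connected graph has exponential growth if for some vertex $v$ there is $\alpha>1$ such that the number of vertices at distance at most $r$ from $v$ is at least $\alpha^r$ for all sufficiently large $r$. *)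

(* Defs.v *)
From Stdlib Require Import Reals List Arith Lia.
Import ListNotations.
Set Implicit Arguments.

Record group := Group {
  carrier :> Type;
  gmul : carrier -> carrier -> carrier;
  gone : carrier;
  ginv : carrier -> carrier;
  gmulA : forall x y z, gmul x (gmul y z) = gmul (gmul x y) z;
  gmul1l : forall x, gmul gone x = x;
  gmulVl : forall x, gmul (ginv x) x = gone
}.

Section Defs.
Variable G : group.

Inductive generated (A : G -> Prop) : G -> Prop :=
| gen_one : generated A (gone G)
| gen_base : forall x, A x -> generated A x
| gen_mul : forall x y, generated A x -> generated A y -> generated A (gmul G x y)
| gen_inv : forall x, generated A x -> generated A (ginv G x).

Definition generates (t : list G) : Prop :=
  forall g : G, generated (fun x => In x t) g.

Definition generating_tuple (n : nat) (t : list G) : Prop :=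
  length t = n /\ generates t.

Definition finitely_generated : Prop := exists t : list G, generates t.

Fixpoint gpow (g : G) (k : nat) : G :=
  match k with O => gone G | S k' => gmul G g (gpow g k') end.

Definition infinite_order (g : G) : Prop :=
  forall k, 0 < k -> gpow g k <> gone G.

Definition replace_at (t : list G) (j : nat) (x : G) : list G :=
  firstn j t ++ x :: skipn (S j) t.

Definition nthG (t : list G) (i : nat) : G := nth i t (gone G).

Definition move (t u : list G) : Prop :=
  exists i j, i < length t /\ j < length t /\ i <> j /\
   (u = replace_at t j (gmul G (nthG t j) (nthG t i)) \/
    u = replace_at t j (gmul G (nthG t j) (ginv G (nthG t i))) \/
    u = replace_at t j (gmul G (nthG t i) (nthG t j)) \/
    u = replace_at t j (gmul G (ginv G (nthG t i)) (nthG t j))).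

(* edges of the product replacement graph Gamma_m(G): both ends are
   generating m-tuples and one is obtained from the other by a move *)
Definition pr_edge (m : nat) (t u : list G) : Prop :=
  generating_tuple m t /\ generating_tuple m u /\ move t u.

Inductive within (m : nat) : nat -> list G -> list G -> Prop :=
| within_refl : forall r t, within m r t t
| within_step : forall r t u w, pr_edge m t u -> within m r u w -> within m (S r) t w.

Definition connected_in (m : nat) (t u : list G) : Prop := exists r, within m r t u.

(* base vertex (g_1,...,g_n,1,...,1) of Gamma_m(G,S) *)
Definition pad (m : nat) (S : list G) : list G := S ++ repeat (gone G) (m - length S).

Definition pr_component_exp_growth (m : nat) (S : list G) : Prop :=
  exists v : list G,
    generating_tuple m (pad m S) /\ connected_in m (pad m S) v /\
    exists alpha : R, (1 < alpha)%R /\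
      exists r0 : nat, forall r, r0 <= r ->
        exists l : list (list G),
          NoDup l /\ (forall w, In w l -> within m r v w) /\
          (alpha ^ r <= INR (length l))%R.
End Defs.
Arguments infinite_order {G} g.
Arguments generating_tuple {G} n t.
Arguments pr_component_exp_growth {G} m S.

(* Main.v *)
Require Import Defs.
From Stdlib Require Import Reals List Arith Lia Lra FinFun.
Import ListNotations.

Lemma g_mulV (G : group) (x : G) : gmul G x (ginv G x) = gone G.
Proof.
  transitivity (gmul G (gmul G (ginv G (ginv G x)) (ginv G x)) (gmul G x (ginv G x))).
  { rewrite gmulVl, gmul1l; reflexivity. }
  rewrite <- gmulA, (gmulA G (ginv G x) x (ginv G x)), gmulVl, gmul1l.
  apply gmulVl.
Qed.

Lemma g_mul1r (G : group) (x : G) : gmul G x (gone G) = x.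
Proof. rewrite <- (gmulVl G x), gmulA, g_mulV, gmul1l. reflexivity. Qed.

Lemma g_invK (G : group) (x : G) : ginv G (ginv G x) = x.
Proof.
  rewrite <- (g_mul1r G (ginv G (ginv G x))), <- (gmulVl G x), gmulA, gmulVl, gmul1l.
  reflexivity.
Qed.

Lemma g_inv1 (G : group) : ginv G (gone G) = gone G.
Proof. rewrite <- (g_mul1r G (ginv G (gone G))). apply gmulVl. Qed.

Lemma g_invM (G : group) (a b : G) : ginv G (gmul G a b) = gmul G (ginv G b) (ginv G a).
Proof.
  set (q := gmul G (ginv G b) (ginv G a)).
  assert (Hq : gmul G q (gmul G a b) = gone G).
  { unfold q. rewrite gmulA, <- (gmulA G (ginv G b)), gmulVl, g_mul1r, gmulVl. reflexivity. }
  rewrite <- (g_mul1r G q), <- (g_mulV G (gmul G a b)), gmulA, Hq, gmul1l. reflexivity.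
Qed.

Lemma g_cancel (G : group) (x y z : G) : gmul G x y = gmul G x z -> y = z.
Proof.
  intro H. rewrite <- (gmul1l G y), <- (gmul1l G z), <- (gmulVl G x), <- !gmulA, H.
  reflexivity.
Qed.

Lemma gpow_add (G : group) (g : G) a b : gpow G g (a + b) = gmul G (gpow G g a) (gpow G g b).
Proof.
  induction a; simpl. - rewrite gmul1l; reflexivity.
  - rewrite IHa, gmulA; reflexivity.
Qed.

Lemma gpow_inj (G : group) (g : G) : infinite_order g -> forall a b, gpow G g a = gpow G g b -> a = b.
Proof.
  intros Hg.
  assert (K : forall a b, a < b -> gpow G g a <> gpow G g b).
  { intros a b Hab E. replace b with (a + (b - a)) in E by lia.
    rewrite gpow_add, <- (g_mul1r G (gpow G g a)) in E at 1.
    apply g_cancel in E. apply (Hg (b - a)); [lia | symmetry; exact E]. }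
  intros a b E. destruct (Nat.lt_trichotomy a b) as [H|[H|H]]; auto.
  - exfalso; exact (K _ _ H E).
  - exfalso; exact (K _ _ H (eq_sym E)).
Qed.

Lemma within_trans (G : group) m r1 t u : within G m r1 t u ->
  forall r2 w, within G m r2 u w -> within G m (r1 + r2) t w.
Proof.
  induction 1; intros r2 w' Hw.
  - clear -Hw.
    revert r. induction Hw; intros r0.
    + apply within_refl.
    + rewrite Nat.add_succ_r. eapply within_step; eauto.
  - simpl. eapply within_step; eauto.
Qed.

Lemma within_snoc (G : group) m r t u w : within G m r t u -> pr_edge G m u w -> within G m (S r) t w.
Proof.
  intros H E. rewrite <- Nat.add_1_r. eapply within_trans; eauto.
  eapply within_step; [exact E | apply (within_refl G m 0)].
Qed.

Lemma conn_trans (G : group) m t u w : connected_in G m t u -> connected_in G m u w -> connected_in G m t w.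
Proof. intros [r1 H1] [r2 H2]. exists (r1 + r2). eapply within_trans; eauto. Qed.

Lemma conn_edge (G : group) m t u : pr_edge G m t u -> connected_in G m t u.
Proof. intros E. exists 1. eapply within_step; [exact E|apply within_refl]. Qed.

Lemma slot_conn (G : group) m (S : list G) (T : G -> list G)
  (HT : forall z i, i < length S ->
     pr_edge G m (T z) (T (gmul G z (nth i S (gone G)))) /\
     pr_edge G m (T z) (T (gmul G z (ginv G (nth i S (gone G)))))) :
  forall h, generated G (fun x => In x S) h -> forall z,
    connected_in G m (T z) (T (gmul G z h)) /\
    connected_in G m (T z) (T (gmul G z (ginv G h))).
Proof.
  induction 1; intro z.
  - rewrite g_inv1, g_mul1r. split; exists 0; apply within_refl.
  - destruct (In_nth S x (gone G) H) as [i [Hi Ei]]. subst x.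
    destruct (HT z i Hi). split; apply conn_edge; auto.
  - split.
    + rewrite gmulA. eapply conn_trans; [apply (proj1 (IHgenerated1 z)) | apply (proj1 (IHgenerated2 _))].
    + rewrite g_invM, gmulA. eapply conn_trans; [apply (proj2 (IHgenerated2 z)) | apply (proj2 (IHgenerated1 _))].
  - rewrite g_invK. split; [apply (proj2 (IHgenerated z))|apply (proj1 (IHgenerated z))].
Qed.

Definition tup (G : group) (S : list G) k (x y : G) : list G :=
  S ++ x :: y :: repeat (gone G) k.

Lemma replace_slot1 (G : group) (l : list G) x y rest z :
  replace_at G (l ++ x :: y :: rest) (length l) z = l ++ z :: y :: rest.
Proof. unfold replace_at. induction l; simpl; [reflexivity|]. f_equal. exact IHl. Qed.

Lemma replace_slot2 (G : group) (l : list G) x y rest z :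
  replace_at G (l ++ x :: y :: rest) (S (length l)) z = l ++ x :: z :: rest.
Proof. unfold replace_at. induction l; simpl; [reflexivity|]. f_equal. exact IHl. Qed.

Lemma nth_slot1 (G : group) (l : list G) x y rest :
  nthG G (l ++ x :: y :: rest) (length l) = x.
Proof. unfold nthG. rewrite app_nth2 by lia. rewrite Nat.sub_diag. reflexivity. Qed.

Lemma nth_slot2 (G : group) (l : list G) x y rest :
  nthG G (l ++ x :: y :: rest) (S (length l)) = y.
Proof. unfold nthG. rewrite app_nth2 by lia. replace (S (length l) - length l) with 1 by lia. reflexivity. Qed.

Lemma nth_pre (G : group) (l : list G) rest i : i < length l ->
  nthG G (l ++ rest) i = nth i l (gone G).
Proof. intro. unfold nthG. apply app_nth1; auto. Qed.

Lemma gen_mono (G : group) (A B : G -> Prop) : (forall x, A x -> B x) ->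
  forall g, generated G A g -> generated G B g.
Proof. intros HAB g H; induction H; [apply gen_one|apply gen_base; auto|apply gen_mul; auto|apply gen_inv; auto]. Qed.

Lemma tup_gen (G : group) n (S : list G) k x y : generating_tuple n S ->
  generating_tuple (n + 2 + k) (tup G S k x y).
Proof.
  intros [HL HS]. split.
  - unfold tup. rewrite length_app. simpl. rewrite repeat_length. lia.
  - intro g. eapply gen_mono; [|apply HS]. intros z Hz. unfold tup. apply in_or_app; auto.
Qed.

Lemma tup_edge1 (G : group) n (S : list G) k x y i c : generating_tuple n S ->
  i < n -> (c = nth i S (gone G) \/ c = ginv G (nth i S (gone G))) ->
  pr_edge G (n + 2 + k) (tup G S k x y) (tup G S k (gmul G x c) y).
Proof.
  intros HS Hi Hc. pose proof HS as [HL _].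
  split; [apply tup_gen; auto|split; [apply tup_gen; auto|]].
  exists i, n. unfold tup. rewrite length_app; simpl. split; [lia|split;[lia|split;[lia|]]].
  rewrite <- HL, nth_slot1, nth_pre by lia. rewrite !replace_slot1.
  destruct Hc; subst c; [left|right;left]; reflexivity.
Qed.

Lemma tup_edge2 (G : group) n (S : list G) k x y i c : generating_tuple n S ->
  i < n -> (c = nth i S (gone G) \/ c = ginv G (nth i S (gone G))) ->
  pr_edge G (n + 2 + k) (tup G S k x y) (tup G S k x (gmul G y c)).
Proof.
  intros HS Hi Hc. pose proof HS as [HL _].
  split; [apply tup_gen; auto|split; [apply tup_gen; auto|]].
  exists i, (Datatypes.S n). unfold tup. rewrite length_app; simpl. split; [lia|split;[lia|split;[lia|]]].
  rewrite <- HL, nth_slot2, nth_pre by lia. rewrite !replace_slot2.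
  destruct Hc; subst c; auto.
Qed.

Lemma tup_edgeL (G : group) n (S : list G) k x y : generating_tuple n S ->
  pr_edge G (n + 2 + k) (tup G S k x y) (tup G S k (gmul G x y) y).
Proof.
  intros HS. pose proof HS as [HL _].
  split; [apply tup_gen; auto|split; [apply tup_gen; auto|]].
  exists (Datatypes.S n), n. unfold tup. rewrite length_app; simpl. split; [lia|split;[lia|split;[lia|]]].
  rewrite <- HL, nth_slot1, nth_slot2, replace_slot1. auto.
Qed.

Lemma tup_edgeR (G : group) n (S : list G) k x y : generating_tuple n S ->
  pr_edge G (n + 2 + k) (tup G S k x y) (tup G S k x (gmul G y x)).
Proof.
  intros HS. pose proof HS as [HL _].
  split; [apply tup_gen; auto|split; [apply tup_gen; auto|]].
  exists n, (Datatypes.S n). unfold tup. rewrite length_app; simpl. split; [lia|split;[lia|split;[lia|]]].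
  rewrite <- HL, nth_slot1, nth_slot2, replace_slot2. auto.
Qed.

Fixpoint sb (w : list bool) : nat * nat :=
  match w with
  | [] => (1, 1)
  | b :: w' => let (a, c) := sb w' in if b then (a + c, c) else (a, c + a)
  end.

Fixpoint allw (r : nat) : list (list bool) :=
  match r with
  | O => [[]]
  | Datatypes.S r' => map (cons true) (allw r') ++ map (cons false) (allw r')
  end.

Lemma sb_pos w : 1 <= fst (sb w) /\ 1 <= snd (sb w).
Proof. induction w as [|b w IH]; simpl; [lia|]. destruct (sb w) as [a c]; simpl in *. destruct b; simpl; lia. Qed.

Lemma sb_inj w1 : forall w2, length w1 = length w2 -> sb w1 = sb w2 -> w1 = w2.
Proof.
  induction w1 as [|b1 w1 IH]; intros [|b2 w2] HL E; simpl in *; try discriminate; auto.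
  pose proof (sb_pos w1) as P1; pose proof (sb_pos w2) as P2.
  destruct (sb w1) as [a1 c1] eqn:E1, (sb w2) as [a2 c2] eqn:E2; simpl in *.
  destruct b1, b2; injection E as E3 E4.
  - f_equal. apply IH; [lia|]. rewrite E2. f_equal; lia.
  - lia.
  - lia.
  - f_equal. apply IH; [lia|]. rewrite E2. f_equal; lia.
Qed.

Lemma allw_len r : length (allw r) = 2 ^ r.
Proof. induction r; simpl; auto. rewrite length_app, !length_map, IHr. lia. Qed.

Lemma allw_in r w : In w (allw r) -> length w = r.
Proof.
  revert w; induction r; simpl; intros w H.
  - destruct H as [<-|[]]; reflexivity.
  - apply in_app_or in H. destruct H as [H|H]; apply in_map_iff in H as [w' [<- H]]; simpl; f_equal; auto.
Qed.

Lemma allw_nodup r : NoDup (allw r).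
Proof.
  induction r; simpl. - constructor; [intros []|constructor].
  - apply NoDup_app.
    + apply Injective_map_NoDup; auto. intros x y H; injection H; auto.
    + apply Injective_map_NoDup; auto. intros x y H; injection H; auto.
    + intros x H1 H2. apply in_map_iff in H1 as [? [<- _]]. apply in_map_iff in H2 as [? [E _]]. discriminate.
Qed.

Theorem lemma3p8 (G : group) :
  finitely_generated G ->
  (exists g : G, @infinite_order G g) ->
  forall (n : nat) (S : list G), generating_tuple n S ->
  forall m : nat, n + 2 <= m ->
  pr_component_exp_growth m S.
Proof.
  intros _ [g Hg] n S HS m Hm.
  pose proof HS as [HL HgenS].
  set (k := m - n - 2).
  replace m with (n + 2 + k) by (unfold k; lia).
  assert (Hpad : pad G (n + 2 + k) S = tup G S k (gone G) (gone G)).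
  { unfold pad, tup. rewrite HL. replace (n + 2 + k - n) with (Datatypes.S (Datatypes.S k)) by lia. reflexivity. }
  set (Tw := fun w => tup G S k (gpow G g (fst (sb w))) (gpow G g (snd (sb w)))).
  assert (Hwalk : forall w, within G (n + 2 + k) (length w) (Tw []) (Tw w)).
  { induction w as [|b w IH]; [apply within_refl|].
    simpl length. eapply within_snoc; [exact IH|].
    unfold Tw. simpl. destruct (sb w) as [a c]. destruct b; simpl.
    - rewrite gpow_add. apply tup_edgeL; auto.
    - rewrite gpow_add. apply tup_edgeR; auto. }
  exists (Tw []). split; [rewrite Hpad; apply tup_gen; auto|split].
  - rewrite Hpad.
    pose proof (gen_g := HgenS g).
    eapply conn_trans.
    { apply (proj1 (slot_conn G (n+2+k) S (fun z => tup G S k z (gone G))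
        (fun z i Hi => conj (tup_edge1 G n S k z (gone G) i _ HS ltac:(lia) (or_introl eq_refl))
                            (tup_edge1 G n S k z (gone G) i _ HS ltac:(lia) (or_intror eq_refl)))
        g gen_g (gone G))). }
    eapply conn_trans.
    { apply (proj1 (slot_conn G (n+2+k) S (fun z => tup G S k (gmul G (gone G) g) z)
        (fun z i Hi => conj (tup_edge2 G n S k _ z i _ HS ltac:(lia) (or_introl eq_refl))
                            (tup_edge2 G n S k _ z i _ HS ltac:(lia) (or_intror eq_refl)))
        g gen_g (gone G))). }
    unfold Tw; simpl. rewrite gmul1l, g_mul1r. exists 0; apply within_refl.
  - exists 2%R. split; [lra|]. exists 0. intros r _.
    exists (map Tw (allw r)). split; [|split].
    + apply NoDup_map_NoDup_ForallPairs; [|apply allw_nodup].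
      intros w1 w2 H1 H2 E. apply sb_inj; [rewrite (allw_in r w1), (allw_in r w2); auto|].
      unfold Tw, tup in E. apply app_inv_head in E. injection E as E1 E2.
      apply gpow_inj in E1; auto. apply gpow_inj in E2; auto.
      destruct (sb w1), (sb w2); simpl in *; subst; reflexivity.
    + intros w Hw. apply in_map_iff in Hw as [w' [<- Hw']].
      rewrite <- (allw_in r w' Hw'). apply Hwalk.
    + rewrite length_map, allw_len, pow_INR. simpl INR. right; reflexivity.
Qed.
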